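(* For every pair of positive integers $\ell,k$ with $1\leq \ell<k$, $$\sum_{r=1}^k r!\,{k\brace r}=\sum_{p=1}^{\ell}\sum_{q=1}^{k-\ell}{\ell\brace p}{k-\ell\brace q}\,p!\,q!\,D(p,q).$$
   Context: ${k\brace r}$ denotes the Stirling number of the second kind (number of partitions of a $k$-element set into $r$ nonempty blocks). $D(m,n)$ is the Delannoy number, defined for nonnegative integers $m,n$ by $D(m,n)=1$ if $mn=0$, and $D(m,n)=D(m-1,n)+D(m-1,n-1)+D(m,n-1)$ if $mn\neq0$. *)

(* Defs.v *)
From mathcomp Require Import all_boot.
Set Implicit Arguments. Unset Strict Implicit. Unset Printing Implicit Defensive.

Fixpoint stirling2 (k r : nat) : nat :=
  match k, r with
  | 0, 0 => 1
  | 0, _.+1 => 0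
  | _.+1, 0 => 0
  | k'.+1, r'.+1 => r'.+1 * stirling2 k' r'.+1 + stirling2 k' r'
  end.

(* Delannoy numbers: D(m,n)=1 if mn=0, else D(m-1,n)+D(m-1,n-1)+D(m,n-1). *)
Fixpoint delannoy (m n : nat) : nat :=
  match m with
  | 0 => 1
  | m'.+1 =>
    let fix aux (n : nat) : nat :=
      match n with
      | 0 => 1
      | n'.+1 => delannoy m' n'.+1 + delannoy m' n' + aux n'
      end
    in aux n
  end.

Lemma delannoy_check : [:: delannoy 2 2; delannoy 3 2; delannoy 3 3; delannoy 1 5] = [:: 13; 25; 63; 11].
Proof. by []. Qed.
Lemma stirling_check : [:: stirling2 4 2; stirling2 5 3; stirling2 3 3] = [:: 7; 25; 1].
Proof. by []. Qed.

(* Main.v *)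
Require Import Defs.
From mathcomp Require Import all_boot zify.

Lemma Drec m n : delannoy m.+1 n.+1 = delannoy m n.+1 + delannoy m n + delannoy m.+1 n.
Proof. by []. Qed.
Lemma D0 q : delannoy 0 q = 1. Proof. by []. Qed.
Lemma Dp0 p : delannoy p 0 = 1. Proof. by case: p. Qed.
Lemma D1 q : delannoy 1 q = q.*2.+1.
Proof. elim: q => [|q IH] //. rewrite Drec IH !D0. lia. Qed.
Lemma Dp1 p : delannoy p 1 = p.*2.+1.
Proof. elim: p => [|p IH] //. rewrite Drec IH !Dp0. lia. Qed.

Lemma key p q : q.+1 * delannoy p q.+1 + q * delannoy p q
  = p.+1 * delannoy p.+1 q + p * delannoy p q.
Proof.
elim: p q => [|p IHp] q.
  rewrite !D0 D1; lia.
elim: q => [|q IHq].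
  rewrite !Dp0 Dp1; lia.
have h1 := IHp q. have h2 := IHp q.+1.
rewrite !Drec in h1 h2 IHq *.
lia.
Qed.

Definition s n r := r`! * stirling2 n r.

Lemma S_big n r : n < r -> stirling2 n r = 0.
Proof.
elim: n r => [|n IH] [|r] //= h.
by rewrite (IH r.+1) ?(IH r) //; lia.
Qed.

Lemma s_rec n r : s n.+1 r.+1 = r.+1 * (s n r.+1 + s n r).
Proof. rewrite /s /= factS; lia. Qed.

Lemma shift (g : nat -> nat) b M : b <= M ->
  \sum_(0 <= q < M.+2) s b.+1 q * g q =
  \sum_(0 <= q < M.+2) s b q * (q * g q + q.+1 * g q.+1).
Proof.
move=> hb.
rewrite big_nat_recl // {1}/s /= muln0 mul0n add0n.
under eq_bigr do rewrite s_rec.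
under [RHS]eq_bigr do rewrite mulnDr.
rewrite big_split /= [X in _ = X + _]big_nat_recl // mul0n muln0 add0n.
rewrite [X in _ = _ + X]big_nat_recr //=.
have -> : s b M.+1 = 0 by rewrite /s S_big ?muln0 //; lia.
rewrite mul0n addn0.
rewrite -big_split /=.
apply: eq_bigr => i _; lia.
Qed.

Definition R N a b := \sum_(0 <= p < N) \sum_(0 <= q < N) s a p * s b q * delannoy p q.

Lemma swap a b M : a <= M -> b <= M -> R M.+2 a b.+1 = R M.+2 a.+1 b.
Proof.
move=> ha hb; rewrite /R.
transitivity (\sum_(0 <= p < M.+2) \sum_(0 <= q < M.+2)
   s a p * s b q * (q * delannoy p q + q.+1 * delannoy p q.+1)).
  apply: eq_bigr => p _.
  under eq_bigr do rewrite -mulnA.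
  rewrite -big_distrr /= shift // big_distrr /=.
  by apply: eq_bigr => q _; rewrite mulnA.
rewrite exchange_big_nat [RHS]exchange_big_nat.
apply: eq_bigr => q _.
transitivity (s b q * \sum_(0 <= p < M.+2) s a.+1 p * delannoy p q); last first.
  rewrite big_distrr /=; apply: eq_bigr => p _; lia.
rewrite shift // big_distrr; apply: eq_bigr => p _.
rewrite -[ssrnat_muln__canonical__Monoid_MulLaw _ _]/(muln _ _). rewrite addnC key; lia.
Qed.

Lemma R0 M n : R M.+1 0 n = \sum_(0 <= q < M.+1) s n q.
Proof.
rewrite /R big_nat_recl // [X in _ + X]big1 ?addn0.
  by apply: eq_bigr => q _; rewrite /s D0 /= mul1n muln1.
move=> i _; apply: big1 => q _; by rewrite /s /= !muln0.
Qed.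

Lemma Rall M a b : a + b <= M -> R M.+2 a b = \sum_(0 <= q < M.+2) s (a + b) q.
Proof.
elim: a b => [|a IH] b h.
  by rewrite R0.
rewrite -swap; try lia.
rewrite IH; [by rewrite addSn addnS | lia].
Qed.

Lemma ext (f : nat -> nat) n N : f 0 = 0 -> (forall i, n < i -> f i = 0) -> n < N ->
  \sum_(1 <= i < n.+1) f i = \sum_(0 <= i < N) f i.
Proof.
move=> h0 hz hN.
rewrite [RHS](big_cat_nat _ (n:=n.+1)) //= [X in _ = _ + X]big1_seq ?addn0; last first.
  move=> i /andP [_]; rewrite mem_iota => /andP [hi _]; exact: hz.
by rewrite [RHS]big_nat_recl // h0 add0n big_add1.
Qed.

Theorem theorem2 (l k : nat) (hl : 1 <= l) (hlk : l < k) :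
  \sum_(1 <= r < k.+1) r`! * stirling2 k r =
  \sum_(1 <= p < l.+1) \sum_(1 <= q < (k - l).+1)
     stirling2 l p * stirling2 (k - l) q * p`! * q`! * delannoy p q.
Proof.
have hk : k = l + (k - l) by lia.
rewrite (@ext (fun r => r`! * stirling2 k r) k k.+2); last first.
  - by [].
  - by move=> i hi; rewrite S_big // muln0.
  - by case: k hk hlk.
rewrite (@ext (fun p => \sum_(1 <= q < (k - l).+1)
     stirling2 l p * stirling2 (k - l) q * p`! * q`! * delannoy p q) l k.+2); last first.
  - lia.
  - by move=> i hi; apply: big1 => q _; rewrite S_big.
  - by apply: big1 => q _; rewrite (_ : stirling2 l 0 = 0) //; case: (l) hl.
transitivity (\sum_(0 <= p < k.+2) \sum_(0 <= q < k.+2)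
     stirling2 l p * stirling2 (k - l) q * p`! * q`! * delannoy p q); last first.
  apply: eq_bigr => p _.
  rewrite (@ext (fun q => stirling2 l p * stirling2 (k - l) q * p`! * q`! * delannoy p q) (k - l) k.+2) //.
  - have hkl : 0 < k - l by lia.
    by rewrite (_ : stirling2 (k - l) 0 = 0) ?muln0 ?mul0n //; case: (k - l) hkl.
  - by move=> i hi; rewrite (@S_big (k - l)) // !muln0 mul0n.
  - lia.
transitivity (R k.+2 l (k - l)); last first.
  rewrite /R; apply: eq_bigr => p _; apply: eq_bigr => q _; rewrite /s; lia.
rewrite Rall; last by lia.
by rewrite -hk.
Qed.
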